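(* Let $\tau\colon\tilde{\mathcal{E}}\to\mathcal{E}$ be a finite-dimensional irreducible Abelian covering and let $\omega$ be a nontrivial conservation law of $\mathcal{E}$. Then the pull-back $\tau^*\omega$ is a trivial conservation law of $\tilde{\mathcal{E}}$ if and only if $[\omega]\in\mathcal{L}_\tau$.
   Context: Setting: $\mathcal{E}$ is a differentially connected infinitely prolonged equation with two independent variables $x,y$ and total derivatives $D_x,D_y$. A conservation law is a horizontal 1-form $\omega=X\,dx+Y\,dy$ with $D_xY-D_yX=0$; it is trivial if $\omega=d_hP=D_xP\,dx+D_yP\,dy$ for some function $P$; $\mathrm{CL}(\mathcal{E})$ is the space of conservation laws modulo trivial ones. For a covering $\tau\colon\tilde{\mathcal{E}}\to\mathcal{E}$ with total derivatives $\tilde D_x,\tilde D_y$, conservation laws of $\tilde{\mathcal{E}}$ and their triviality are defined the same way using $\tilde D_x,\tilde D_y$ and functions on $\tilde{\mathcal{E}}$. A covering of rank $r$ is Abelian if fiber coordinates $w^1,\dots,w^r$ can be chosen with $\tilde D_x=D_x+\sum_\alpha X^\alpha\partial/\partial w^\alpha$, $\tilde D_y=D_y+\sum_\alpha Y^\alpha\partial/\partial w^\alpha$, $X^\alpha,Y^\alpha\in\mathcal{F}(\mathcal{E})$; it is irreducible if $\tilde D_xh=\tilde D_yh=0$ has only constant solutions. $\mathcal{L}_\tau\subset\mathrm{CL}(\mathcal{E})$ is the subspace spanned by the classes $[X^\alpha dx+Y^\alpha dy]$, $\alpha=1,\dots,r$ (it depends only on the equivalence class of $\tau$). *)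

(* Defs.v *)
(* Abstract differential-algebraic model of an infinitely
   prolonged equation with two independent variables and of an Abelian
   covering over it. *)
From HB Require Import structures.
From mathcomp Require Import all_boot all_order all_algebra.
Set Implicit Arguments. Unset Strict Implicit. Unset Printing Implicit Defensive.
Import GRing.Theory.
Local Open Scope ring_scope.

Definition is_derivation (R : realFieldType) (A : comAlgType R) (D : A -> A) : Prop :=
  (forall (k : R) (a b : A), D (k *: a + b) = k *: D a + D b) /\
  (forall a b : A, D (a * b) = D a * b + a * D b).

(* The equation E: F(E) = A, total derivatives Dx, Dy (commuting derivations),
   differentially connected. *)
Record equation (R : realFieldType) (A : comAlgType R) (Dx Dy : A -> A) : Prop := {
  eq_derx : is_derivation Dx;
  eq_dery : is_derivation Dy;
  eq_comm : forall a, Dx (Dy a) = Dy (Dx a);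
  eq_dconn : forall a, Dx a = 0 -> Dy a = 0 -> exists c : R, a = c%:A }.

(* Conservation law  omega = X dx + Y dy  w.r.t. total derivatives Dx, Dy. *)
Definition cons_law (R : realFieldType) (A : comAlgType R) (Dx Dy : A -> A) (X Y : A) : Prop :=
  Dx Y - Dy X = 0.

Definition trivial_cl (R : realFieldType) (A : comAlgType R) (Dx Dy : A -> A) (X Y : A) : Prop :=
  exists P : A, X = Dx P /\ Y = Dy P.

(* Total derivative on the covering:  D~ = D + sum_alpha X^alpha d/dw^alpha,
   where D (= Dl) is the total derivative of E acting on the jet variables,
   with the fiber coordinates w treated as parameters. *)
Definition tot_der (R : realFieldType) (A B : comAlgType R) (r : nat)
  (iota : A -> B) (d : 'I_r -> B -> B) (Dl : B -> B) (Xs : 'I_r -> A) (f : B) : B :=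
  Dl f + \sum_(i < r) iota (Xs i) * d i f.

(* Abelian covering of rank r over E: F(E~) = B, tau^* = iota,
   fiber coordinates w^alpha, vertical fields d alpha = d/dw^alpha,
   lifts Dxl, Dyl of D_x, D_y, and X^alpha = Xs alpha, Y^alpha = Ys alpha. *)
Record abelian_covering (R : realFieldType) (A B : comAlgType R) (Dx Dy : A -> A)
  (r : nat) (iota : {lrmorphism A -> B}) (w : 'I_r -> B) (d : 'I_r -> B -> B)
  (Dxl Dyl : B -> B) (Xs Ys : 'I_r -> A) : Prop := {
  cov_inj : injective iota;
  cov_d_der : forall i, is_derivation (d i);
  cov_d_base : forall i a, d i (iota a) = 0;
  cov_d_w : forall i j, d i (w j) = (i == j)%:R;
  cov_d_comm : forall i j f, d i (d j f) = d j (d i f);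
  cov_d_ker : forall f, (forall i, d i f = 0) -> exists a, f = iota a;
  cov_Dxl_der : is_derivation Dxl;
  cov_Dyl_der : is_derivation Dyl;
  cov_Dxl_base : forall a, Dxl (iota a) = iota (Dx a);
  cov_Dyl_base : forall a, Dyl (iota a) = iota (Dy a);
  cov_Dxl_w : forall i, Dxl (w i) = 0;
  cov_Dyl_w : forall i, Dyl (w i) = 0;
  cov_Dxl_d : forall i f, d i (Dxl f) = Dxl (d i f);
  cov_Dyl_d : forall i f, d i (Dyl f) = Dyl (d i f);
  cov_Dl_comm : forall f, Dxl (Dyl f) = Dyl (Dxl f);
  cov_integrable : forall f,
    tot_der iota d Dxl Xs (tot_der iota d Dyl Ys f) =
    tot_der iota d Dyl Ys (tot_der iota d Dxl Xs f) }.

Definition irreducible_cov (R : realFieldType) (B : comAlgType R) (tDx tDy : B -> B) : Prop :=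
  forall h : B, tDx h = 0 -> tDy h = 0 -> exists c : R, h = c%:A.

(* [X dx + Y dy] lies in L_tau = span of the classes [X^alpha dx + Y^alpha dy]. *)
Definition in_L_tau (R : realFieldType) (A : comAlgType R) (Dx Dy : A -> A) (r : nat)
  (Xs Ys : 'I_r -> A) (X Y : A) : Prop :=
  exists c : 'I_r -> R,
    trivial_cl Dx Dy (X - \sum_(i < r) c i *: Xs i) (Y - \sum_(i < r) c i *: Ys i).

(* Main.v *)
Require Import Defs.
From HB Require Import structures.
From mathcomp Require Import all_boot all_order all_algebra.
Local Open Scope ring_scope.
Import GRing.Theory.

Lemma der0 (R : realFieldType) (A : comAlgType R) (D : A -> A) :
  is_derivation D -> D 0 = 0.
Proof.
move=> [hl _]; have := hl 1 0 0; rewrite scaler0 add0r scale1r.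
by move=> h; apply: (@addrI _ (D 0)); rewrite addr0 -h.
Qed.
Arguments der0 {R A D}.

Lemma derD (R : realFieldType) (A : comAlgType R) (D : A -> A) :
  is_derivation D -> forall a b, D (a + b) = D a + D b.
Proof. by move=> [hl _] a b; have := hl 1 a b; rewrite !scale1r. Qed.
Arguments derD {R A D}.

Lemma derZ (R : realFieldType) (A : comAlgType R) (D : A -> A) :
  is_derivation D -> forall k a, D (k *: a) = k *: D a.
Proof.
move=> hD k a; have [hl _] := hD; have := hl k a 0.
by rewrite addr0 (der0 hD) addr0.
Qed.
Arguments derZ {R A D}.

Lemma derB (R : realFieldType) (A : comAlgType R) (D : A -> A) :
  is_derivation D -> forall a b, D (a - b) = D a - D b.
Proof.
move=> hD a b; have [hl _] := hD; have := hl (-1) b a.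
by rewrite !scaleN1r addrC => ->; rewrite addrC.
Qed.
Arguments derB {R A D}.

Lemma der_sum (R : realFieldType) (A : comAlgType R) (D : A -> A) (r : nat)
  (F : 'I_r -> A) : is_derivation D -> D (\sum_(i < r) F i) = \sum_(i < r) D (F i).
Proof.
move=> hD; elim/big_rec2: _ => [|i y1 y2 _ IH]; first exact: der0.
by rewrite (derD hD) IH.
Qed.
Arguments der_sum {R A D r}.

Lemma tot_derL (R : realFieldType) (A B : comAlgType R) (r : nat)
  (iota : A -> B) (d : 'I_r -> B -> B) (Dl : B -> B) (Xs : 'I_r -> A) :
  is_derivation Dl -> (forall i, is_derivation (d i)) ->
  forall k f g, tot_der iota d Dl Xs (k *: f + g) =
     k *: tot_der iota d Dl Xs f + tot_der iota d Dl Xs g.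
Proof.
move=> hDl hd k f g; rewrite /tot_der (derD hDl) (derZ hDl).
under eq_bigr => i _ do rewrite (derD (hd i)) (derZ (hd i)) mulrDr -scalerAr.
rewrite big_split /= -scaler_sumr scalerDr.
by rewrite -!addrA; congr (_ + _); rewrite addrCA.
Qed.
Arguments tot_derL {R A B r}.

Lemma tot_der0 (R : realFieldType) (A B : comAlgType R) (r : nat)
  (iota : A -> B) (d : 'I_r -> B -> B) (Dl : B -> B) (Xs : 'I_r -> A) :
  is_derivation Dl -> (forall i, is_derivation (d i)) ->
  tot_der iota d Dl Xs 0 = 0.
Proof.
move=> hDl hd; rewrite /tot_der (der0 hDl) add0r big1 // => i _.
by rewrite (der0 (hd i)) mulr0.
Qed.
Arguments tot_der0 {R A B r}.

Lemma tot_der_comb (R : realFieldType) (A B : comAlgType R) (r : nat)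
  (iota : {lrmorphism A -> B}) (w : 'I_r -> B) (d : 'I_r -> B -> B)
  (Dl : B -> B) (Xs : 'I_r -> A) (Db : A -> A) :
  is_derivation Dl -> (forall i, is_derivation (d i)) ->
  (forall i a, d i (iota a) = 0) -> (forall i j, d i (w j) = (i == j)%:R) ->
  (forall a, Dl (iota a) = iota (Db a)) -> (forall i, Dl (w i) = 0) ->
  forall P (c : 'I_r -> R),
  tot_der iota d Dl Xs (iota P + \sum_(j < r) c j *: w j) =
  iota (Db P + \sum_(j < r) c j *: Xs j).
Proof.
move=> hDl hd hdb hdw hb hw P c.
have := tot_derL iota d Dl Xs hDl hd 1 (iota P) (\sum_(j < r) c j *: w j).
rewrite !scale1r => ->.
rewrite rmorphD /=; congr (_ + _).
  rewrite /tot_der hb big1 ?addr0 // => i _; by rewrite hdb mulr0.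
rewrite raddf_sum /=.
elim/big_rec2: _ => [|j y1 y2 _ IH]; first exact: tot_der0.
rewrite tot_derL // IH linearZ /=; congr (_ *: _ + _).
rewrite /tot_der hw add0r (bigD1 j) //= hdw eqxx mulr1 big1 ?addr0 // => i /negPf ne.
by rewrite hdw ne mulr0.
Qed.
Arguments tot_der_comb {R A B r iota w d Dl}.

Theorem mainTheorem3 (R : realFieldType) (A B : comAlgType R) (Dx Dy : A -> A)
  (r : nat) (iota : {lrmorphism A -> B}) (w : 'I_r -> B) (d : 'I_r -> B -> B)
  (Dxl Dyl : B -> B) (Xs Ys : 'I_r -> A) :
  equation Dx Dy ->
  abelian_covering Dx Dy iota w d Dxl Dyl Xs Ys ->
  irreducible_cov (tot_der iota d Dxl Xs) (tot_der iota d Dyl Ys) ->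
  forall X Y : A, cons_law Dx Dy X Y -> ~ trivial_cl Dx Dy X Y ->
  (trivial_cl (tot_der iota d Dxl Xs) (tot_der iota d Dyl Ys) (iota X) (iota Y)
   <-> in_L_tau Dx Dy Xs Ys X Y).
Proof.
move=> hE hC hirr X Y _ _.
have hd := cov_d_der hC; have hdb := cov_d_base hC; have hdw := cov_d_w hC.
have cx := tot_der_comb Xs Dx (cov_Dxl_der hC) hd hdb hdw (cov_Dxl_base hC) (cov_Dxl_w hC).
have cy := tot_der_comb Ys Dy (cov_Dyl_der hC) hd hdb hdw (cov_Dyl_base hC) (cov_Dyl_w hC).
split.
- move=> [Q [hX hY]].
  have comm : forall (Dl : B -> B) (Zs : 'I_r -> A) j f,
      is_derivation Dl -> (forall i f, d i (Dl f) = Dl (d i f)) ->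
      d j (tot_der iota d Dl Zs f) = tot_der iota d Dl Zs (d j f).
    move=> Dl Zs j f hDl hc; rewrite /tot_der (derD (hd j)) hc der_sum //.
    congr (_ + _); apply: eq_bigr => i _.
    have [_ hm] := hd j; by rewrite hm hdb mul0r add0r (cov_d_comm hC).
  have hc : forall j, exists c : R, d j Q = c%:A.
    move=> j; apply: hirr.
      by rewrite -(comm Dxl Xs j Q (cov_Dxl_der hC) (cov_Dxl_d hC)) -hX hdb.
    by rewrite -(comm Dyl Ys j Q (cov_Dyl_der hC) (cov_Dyl_d hC)) -hY hdb.
  have [c hcE] := fin_all_exists hc.
  have [P hP] : exists P, Q - \sum_(j < r) c j *: w j = iota P.
    apply: (cov_d_ker hC) => i.
    rewrite (derB (hd i)) (der_sum _ (hd i)) hcE.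
    rewrite (bigD1 i) //= (derZ (hd i)) hdw eqxx big1 ?addr0 ?subrr // => j /negPf ne.
    by rewrite (derZ (hd i)) hdw eq_sym ne scaler0.
  have eQ : Q = iota P + \sum_(j < r) c j *: w j by rewrite -hP subrK.
  exists c, P; split; apply: (cov_inj hC); rewrite rmorphB /=.
    by rewrite hX eQ cx rmorphD /= addrK.
  by rewrite hY eQ cy rmorphD /= addrK.
- move=> [c [P [hX hY]]].
  exists (iota P + \sum_(j < r) c j *: w j); split.
    by rewrite cx -hX subrK.
  by rewrite cy -hY subrK.
Qed.
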